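(* Let $A$ be an additive poset and $a,b\in A$. Then $a$ covers $b$ if and only if $a+b$ is an atom of $A$ and $a+b\le a$.
   Context: An additive poset is a pair $(A,\le)$ where $A$ is an abelian group and $\le$ is a partial order on $A$ such that for all $a,b,c\in A$: $(\ast)$ if $b\le a$ and $c\le a$ then $b+c\le a$; $(\ast\ast)$ if $a\le b$ and $a\le c$ then $a\le a+b+c$. (Then $0$ is the least element.) An element $a$ covers $b$ if $b<a$ (i.e. $b\le a$, $b\ne a$) and there is no $c$ with $b<c<a$. An atom of $A$ is an element covering $0$, i.e. a nonzero $a$ whose tail $A_a=\{x\in A:x\le a\}$ equals $\{0,a\}$. *)

(* Defs.v *)
From HB Require Import structures.
From mathcomp Require Import all_boot all_algebra.
Set Implicit Arguments. Unset Strict Implicit. Unset Printing Implicit Defensive.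
Import GRing.Theory.
Local Open Scope ring_scope.

Definition additive_poset (A : zmodType) (le : A -> A -> Prop) : Prop :=
  [/\ (forall a, le a a),
      (forall a b, le a b -> le b a -> a = b),
      (forall a b c, le a b -> le b c -> le a c),
      (forall a b c, le b a -> le c a -> le (b + c) a)
    & (forall a b c, le a b -> le a c -> le a (a + b + c))].

Definition lt_of (A : zmodType) (le : A -> A -> Prop) (b a : A) : Prop :=
  le b a /\ b <> a.

Definition covers (A : zmodType) (le : A -> A -> Prop) (a b : A) : Prop :=
  lt_of le b a /\ ~ (exists c, lt_of le b c /\ lt_of le c a).

Definition atom (A : zmodType) (le : A -> A -> Prop) (a : A) : Prop :=
  covers le a 0.

(* Main.v *)
Require Import Defs.
From mathcomp Require Import all_boot all_algebra.
Local Open Scope ring_scope.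
Import GRing.Theory.

Theorem lemma5p1 (A : zmodType) (le : A -> A -> Prop)
  (hA : additive_poset le) (a b : A) :
  covers le a b <-> (atom le (a + b) /\ le (a + b) a).
Proof.
case: hA => Hr Han Htr Hs Hss.
have F0 : forall x : A, x + x = 0.
  move=> x.
  have h1 : le (x + x) x by apply: Hs.
  have h2 : le (x + x + x) x by apply: Hs.
  have h3 : le x (x + x + x) by apply: Hss.
  have h4 := Han _ _ h2 h3.
  by move: h4 => /eqP; rewrite -subr_eq0 addrK => /eqP.
have N : forall x : A, - x = x.
  by move=> x; apply/eqP; rewrite -subr_eq0 -opprD F0 oppr0.
have K : forall x y : A, x + y + y = x.
  by move=> x y; rewrite -addrA F0 addr0.
have Z : forall x : A, le 0 x by move=> x; rewrite -(F0 x); apply: Hs.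
have L1 : forall x y, le x y -> le (x + y) y by move=> x y h; apply: Hs.
have E0 : forall x y : A, x + y = 0 -> x = y.
  by move=> x y h; rewrite -(K x y) h add0r.
split.
- case=> [[hba nba] nmid].
  have hd : le (a + b) a by rewrite addrC; apply: L1.
  split=> //; split.
    split; first exact: Z.
    by move=> h; apply: nba; symmetry; apply: E0.
  case=> c [[h0c n0c] [hcd ncd]].
  have hca : le c a by apply: Htr hd.
  have hcbc : le c (c + b).
    have := Hss _ _ _ hcd hca.
    by rewrite (addrC a b) addrA K.
  have hbbc : le b (b + c).
    have := Hs _ _ _ (Hr (c + b)) hcbc. rewrite (addrC (c + b) c) addrA F0 add0r. by rewrite (addrC b c).

  apply: nmid; exists (b + c); split; split.
  + exact: hbbc.
  + by move=> h; apply: n0c; rewrite -(F0 b) {2}h addrA F0 add0r.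
  + have := Hs _ _ _ hba hca; done.
  + move=> h; apply: ncd; by rewrite -h addrC addrA F0 add0r.
- case=> [[[h0d n0d] nmid] hda].
  have hba : le b a.
    have := L1 _ _ hda. by rewrite addrC addrA F0 add0r.
  split.
    split=> // h; apply: n0d; by rewrite h F0.
  case=> x [[hbx nbx] [hxa nxa]].
  apply: nmid; exists (b + x).
  have h1 : le (b + x) x by apply: L1.
  have h2 : le (a + b + x) a by rewrite addrC; apply: Hs.
  have h3 : le (b + x) a.
    have := Hs _ _ _ (Hr a) h2. by rewrite !addrA F0 add0r.
  have h4 : le (b + x) (a + b).
    have := Hss _ _ _ h1 h3.
    by rewrite -(addrA b x x) F0 addr0 (addrC b a).
  split; split=> //.
  + by move=> h; apply: nbx; apply: E0; rewrite -h.
  + move=> h; apply: nxa. by rewrite -(K x b) (addrC x b) h K.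
Qed.
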